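(* Let $W=a_1a_2\cdots a_n$ be a square-free word, where each $a_i$ is a single letter, and let $V=a_1^{k_1}a_2^{k_2}\cdots a_n^{k_n}$, where each $k_i$ is a positive integer. Then every square occurring as a factor of $V$ is of the form $x^{2k}$ for some positive integer $k$, where $x=a_i$ for some $i\in\{1,2,\dots,n\}$.
   Context: A square is a finite non-empty word of the form $XX$; a word is square-free if it has no factor that is a square. $x^m$ denotes the letter $x$ repeated $m$ times. *)

(* Defs.v *)
From mathcomp Require Import all_boot.
Set Implicit Arguments. Unset Strict Implicit. Unset Printing Implicit Defensive.

(* Words over an alphabet T are sequences [seq T]; a factor is a contiguous
   subword ([infix] from seq.v). *)

Definition is_square (T : eqType) (u : seq T) : Prop :=
  exists X : seq T, X <> [::] /\ u = X ++ X.

Definition square_free (T : eqType) (w : seq T) : Prop :=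
  forall u : seq T, infix u w -> ~ is_square u.

(* expand W ks = a_1^{k_1} a_2^{k_2} ... a_n^{k_n} where W = a_1...a_n,
   ks = [k_1; ...; k_n]. *)
Definition expand (T : eqType) (W : seq T) (ks : seq nat) : seq T :=
  flatten [seq nseq p.2 p.1 | p <- zip W ks].

(* Main.v *)
Require Import Defs.
From mathcomp Require Import all_boot.
Set Implicit Arguments. Unset Strict Implicit. Unset Printing Implicit Defensive.

Section C.
Variable T : eqType.
Implicit Types (s t : seq T) (x y : T).

Fixpoint compress s : seq T :=
  match s with
  | [::] => [::]
  | x :: s' => if s' is y :: _ then (if x == y then compress s' else x :: compress s') else [:: x]
  end.

Lemma compress1 x : compress [:: x] = [:: x]. Proof. by []. Qed.
Lemma compress2 x y s : compress (x :: y :: s) =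
  if x == y then compress (y :: s) else x :: compress (y :: s).
Proof. by []. Qed.
Arguments compress : simpl never.

Lemma compress_cons x s : compress (x :: s) = x :: behead (compress (x :: s)).
Proof.
elim: s x => [|y s IH] x //.
rewrite compress2; case: eqP => [<-|//]; exact: IH.
Qed.

Lemma compress_nil s : (compress s == [::]) = (s == [::]).
Proof. case: s => // x s; by rewrite compress_cons. Qed.

Lemma last_compress d x s : last d (compress (x :: s)) = last x s.
Proof.
elim: s x d => [|y s IH] x d //.
rewrite compress2 /=; case: eqP => [_|_]; first exact: IH.
rewrite compress_cons /=. by rewrite -(IH y y) [in RHS]compress_cons.
Qed.

Lemma compress_cat x s y t :
  compress (x :: s ++ y :: t) = compress (x :: s) ++
    (if last x s == y then behead (compress (y :: t)) else compress (y :: t)).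
Proof.
elim: s x => [|z s IH] x /=.
  rewrite compress2; case: eqP => [->|_] //; exact: compress_cons.
rewrite !compress2 IH; case: eqP => _ //.
Qed.

Lemma compress_prefix s t : exists r, compress (s ++ t) = compress s ++ r.
Proof.
case: s => [|x s]; first by exists (compress t).
case: t => [|y t]; first by exists [::]; rewrite !cats0.
rewrite cat_cons compress_cat; eexists; reflexivity.
Qed.

Lemma compress_suffix s t : exists p, compress (s ++ t) = p ++ compress t.
Proof.
case: s => [|x s]; first by exists [::].
case: t => [|y t]; first by exists (compress (x :: s)); rewrite !cats0.
rewrite cat_cons compress_cat; case: eqP => [e|_]; last by eexists.
have := last_compress x x s; rewrite e.
have := compress_cons x s.
case/lastP: (compress (x :: s)) => [//|p z] _.
rewrite last_rcons => ->; exists p.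
by rewrite [compress (y :: t)]compress_cons -cats1 -catA.
Qed.

Lemma compress_infix u v : infix u v -> infix (compress u) (compress v).
Proof.
case/infixP=> [a [b ->]].
have [p ->] := compress_suffix a (u ++ b).
have [r ->] := compress_prefix u b.
exact: infix_infix.
Qed.

Lemma mem_compress s z : (z \in compress s) = (z \in s).
Proof.
elim: s => [|x s IH] //.
case: s IH => [|y s] IH //.
rewrite compress2; case: (x =P y) => [e|_].
  by rewrite IH -e !in_cons; case: (z == x).
by rewrite in_cons IH [in RHS]in_cons.
Qed.

Lemma compress_single x s y : compress (x :: s) = [:: y] -> all (pred1 x) s.
Proof.
elim: s x => [|z s IH] x //.
rewrite compress2; case: (x =P z) => [e|_] h.
  by move: h; rewrite -e => h; rewrite /= eqxx /=; exact: IH h.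
by move: h; rewrite compress_cons => -[_].
Qed.

Lemma compress_nseq k x s : compress (nseq k.+1 x ++ s) = compress (x :: s).
Proof. elim: k => // k IH. by rewrite [nseq _ _]/= cat_cons compress2 eqxx -IH. Qed.

Lemma compress_cons' x s : compress (x :: s) =
  if s is [::] then [:: x] else if x == head x s then compress s else x :: compress s.
Proof. by case: s. Qed.


Lemma expand_cons (a : T) W k ks : expand (a :: W) (k :: ks) = nseq k a ++ expand W ks.
Proof. by []. Qed.

Lemma compress_expand (W : seq T) ks : size ks = size W ->
  (forall i, i < size ks -> 0 < nth 0 ks i) -> compress (expand W ks) = compress W.
Proof.
elim: W ks => [|a W IH] [|k ks] //= [hs] hk.
have k0 := hk 0 erefl; case: k k0 hk => // k _ hk.
have hk' : forall i, i < size ks -> 0 < nth 0 ks i by move=> i hi; exact: (hk i.+1).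
rewrite expand_cons compress_nseq !(compress_cons' a) IH //.
case: W ks hs hk' {IH hk} => [|b W] [|k2 ks] //= _ hk'.
have := hk' 0 erefl; case: k2 {hk'} => // k2 _.
Qed.

Lemma compress_sf (W : seq T) : square_free W -> compress W = W.
Proof.
elim: W => [|a W IH] // sf.
have sf' : square_free W.
  by move=> u hu; apply: sf; apply: infix_trans hu (infix_cons _ _).
case: W IH sf sf' => [|b W] IH sf sf' //.
rewrite compress2 IH //; case: (a =P b) => // e.
exfalso; apply: (sf [:: a; a]); last by exists [:: a]; split.
by rewrite -e; exact: (prefix_infix [:: a; a] W).
Qed.

Lemma lemma2p8_aux (W : seq T) (ks : seq nat) :
  square_free W ->
  size ks = size W ->
  (forall i, i < size ks -> 0 < nth 0 ks i) ->
  forall u : seq T, infix u (expand W ks) -> is_square u ->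
  exists (x : T) (k : nat), [/\ x \in W, 0 < k & u = nseq (2 * k) x].
Proof.
move=> sf hs hk u hu [X [hX eu]].
have hc := compress_infix hu.
rewrite compress_expand // (compress_sf sf) in hc.
case: X hX eu => [//|x X'] _ eu.
case hall: (all (pred1 x) X').
  exists x, (size X').+1; split => //.
    rewrite -(compress_sf sf) -(compress_expand hs hk) mem_compress.
    by apply: (mem_infix hu); rewrite eu mem_head.
  move/all_pred1P: hall => e.
  by rewrite eu mul2n -addnn nseqD /= -e.
exfalso.
move: hc; rewrite eu cat_cons compress_cat; case: eqP => [el|_] hc; last first.
  apply: (sf _ hc); exists (compress (x :: X')) => //.
  by rewrite compress_cons.
move: hc el; rewrite compress_cons.
have hl := last_compress x x X'.
have hs1 := @compress_single x X'.
move: hl hs1; rewrite compress_cons.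
case/lastP: (behead (compress (x :: X'))) => [|Z z] /=.
  by move=> _ h; rewrite (h x erefl) in hall.
rewrite last_rcons => -> _ hc ez; rewrite ez in hc.
apply: (sf ((x :: Z) ++ (x :: Z))); last by exists (x :: Z); split.
apply: (@catr_infix _ [:: x]).
by move: hc; rewrite -!cats1 /= -!catA.
Qed.
End C.

Unset Implicit Arguments.
Set Strict Implicit.

Theorem lemma2p8 (T : eqType) (W : seq T) (ks : seq nat) :
  square_free W ->
  size ks = size W ->
  (forall i, i < size ks -> 0 < nth 0 ks i) ->
  forall u : seq T, infix u (expand W ks) -> is_square u ->
  exists (x : T) (k : nat), [/\ x \in W, 0 < k & u = nseq (2 * k) x].
Proof. exact: (@lemma2p8_aux T W ks). Qed.
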